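(* Let $\Phi_1,\Phi_2,\Phi_3,\Psi_1,\Psi_2,\Psi_3:\mathbb{Z}^3\to\mathbb{Q}$ be the functions defined in the context. (a) For all integers $a,b,c$ and each $i\in\{1,2,3\}$, \[ \Phi_i(a,b,c)\,\Phi_i(a-2,b-2,c)=\Phi_i(a-1,b-1,c)^2+\Phi_i(a,b,c+1)\,\Phi_i(a-2,b-2,c-1) \] and \[ \Psi_i(a,b,c)\,\Psi_i(a-2,b-2,c)=\Psi_i(a-1,b-1,c)^2+\Psi_i(a,b,c+1)\,\Psi_i(a-2,b-2,c-1). \] (b) For all integers $a,b$, \[ \Phi_1(a,b,0)\,\Phi_1(a-2,b-2,0)=\Phi_1(a-1,b-1,0)^2+\Phi_1(a,b,1)\,\Phi_1(3b-2a,2b-a,1), \] \[ \Psi_1(a,b,0)\,\Psi_1(a-2,b-2,0)=\Psi_1(a-1,b-1,0)^2+\Psi_1(a,b,1)\,\Psi_1(3b-2a,2b-a,1), \] and moreover for $i\in\{2,3\}$, \[ \Phi_i(a,b,0)\,\Phi_i(a-2,b-2,0)=\Phi_i(a-1,b-1,0)^2+\Phi_i(a,b,1)\,\Phi_{5-i}(3b-2a,2b-a,1), \] \[ \Psi_i(a,b,0)\,\Psi_i(a-2,b-2,0)=\Psi_i(a-1,b-1,0)^2+\Psi_i(a,b,1)\,\Psi_{5-i}(3b-2a,2b-a,1). \]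
   Context: For integers $a,b,c$ define $g(a,b,c)=(b-a)(b-c)+\left\lfloor\frac{(a-c)^2}{3}\right\rfloor$, $q(a,b,c)=\left\lfloor\frac{(a-b+c)^2}{4}\right\rfloor$, $\alpha(a,b,c)=2$ if $3b+a-c\equiv 1\pmod 6$, $\alpha(a,b,c)=3$ if $3b+a-c\equiv 5\pmod 6$, and $\alpha(a,b,c)=1$ otherwise; $\beta(a,b,c)=3$ if $3b+a-c\equiv 1\pmod 6$, $\beta(a,b,c)=2$ if $3b+a-c\equiv 5\pmod 6$, and $\beta(a,b,c)=1$ otherwise. Writing $g=g(a,b,c)$, $q=q(a,b,c)$ and $r=\lfloor (a-c+1)/3\rfloor$, define (exponents may be negative, so values are rational) $\Phi_1(a,b,c)=\alpha(a,b,c)\,2^{g(a,b,c+1)}5^{g}11^{q}$, $\Phi_2(a,b,c)=\alpha(a,b,c)\,2^{g(a,b,c-1)-r+(a-b)}5^{g}11^{q}$, $\Phi_3(a,b,c)=\alpha(a,b,c)\,2^{g(a,b,c-1)-r}5^{g}11^{q}$, $\Psi_1(a,b,c)=\beta(a,b,c)\,2^{g(a,b,c-1)}5^{g}11^{q}$, $\Psi_2(a,b,c)=\beta(a,b,c)\,2^{g(a,b,c+1)+r-(a-b)}5^{g}11^{q}$, $\Psi_3(a,b,c)=\beta(a,b,c)\,2^{g(a,b,c+1)+r}5^{g}11^{q}$. *)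

(* Defs.v *)
From mathcomp Require Import all_boot all_order all_algebra.
Set Implicit Arguments. Unset Strict Implicit. Unset Printing Implicit Defensive.
Import Order.TTheory GRing.Theory Num.Theory.
Local Open Scope ring_scope.

(* Integer floor division: for d > 0, (m %/ d)%Z is floor(m/d) and (m %% d)%Z in [0,d). *)
Definition gfun (a b c : int) : int :=
  (b - a) * (b - c) + (((a - c) ^+ 2) %/ 3)%Z.
Definition qfun (a b c : int) : int := (((a - b + c) ^+ 2) %/ 4)%Z.

Definition sres (a b c : int) : int := ((3 * b + a - c) %% 6)%Z.

Definition alpha (a b c : int) : rat :=
  if sres a b c == 1 then 2 else if sres a b c == 5 then 3 else 1.
Definition beta (a b c : int) : rat :=
  if sres a b c == 1 then 3 else if sres a b c == 5 then 2 else 1.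

Definition rfun (a c : int) : int := ((a - c + 1) %/ 3)%Z.

Definition common (a b c : int) : rat :=
  (5%:Q ^ gfun a b c) * (11%:Q ^ qfun a b c).

Definition Phi1 (a b c : int) : rat :=
  alpha a b c * 2%:Q ^ gfun a b (c + 1) * common a b c.
Definition Phi2 (a b c : int) : rat :=
  alpha a b c * 2%:Q ^ (gfun a b (c - 1) - rfun a c + (a - b)) * common a b c.
Definition Phi3 (a b c : int) : rat :=
  alpha a b c * 2%:Q ^ (gfun a b (c - 1) - rfun a c) * common a b c.
Definition Psi1 (a b c : int) : rat :=
  beta a b c * 2%:Q ^ gfun a b (c - 1) * common a b c.
Definition Psi2 (a b c : int) : rat :=
  beta a b c * 2%:Q ^ (gfun a b (c + 1) + rfun a c - (a - b)) * common a b c.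
Definition Psi3 (a b c : int) : rat :=
  beta a b c * 2%:Q ^ (gfun a b (c + 1) + rfun a c) * common a b c.

(* Indexed families; only the indices 1, 2, 3 are meaningful. *)
Definition Phi (i : nat) : int -> int -> int -> rat :=
  match i with 1%N => Phi1 | 2%N => Phi2 | _ => Phi3 end.
Definition Psi (i : nat) : int -> int -> int -> rat :=
  match i with 1%N => Psi1 | 2%N => Psi2 | _ => Psi3 end.

(* Main.v *)
Require Import Defs.
From mathcomp Require Import all_boot all_order all_algebra.
From mathcomp Require Import zify ring.
Import Order.TTheory GRing.Theory Num.Theory.
Local Open Scope ring_scope.

Lemma flk (k : int) (x : int) : (0 < k)%R ->
  divz (x ^+ 2) k = divz x k * (k * divz x k + 2 * modz x k) + divz (modz x k ^+ 2) k.
Proof.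
move=> kp.
have e : x ^+ 2 = ((x %/ k)%Z * (k * (x %/ k)%Z + 2 * (x %% k)%Z)) * k + (x %% k)%Z ^+ 2.
  by rewrite {1}(divz_eq x k); ring.
by rewrite {1}e divzMDl // gt_eqF.
Qed.

Lemma fl3 (x : int) : ((x %% 3)%Z = 0 /\ 3 * (x ^+ 2 %/ 3)%Z = x ^+ 2) \/
  ((x %% 3)%Z <> 0 /\ 3 * (x ^+ 2 %/ 3)%Z = x ^+ 2 - 1).
Proof.
rewrite flk //.
have := divz_eq x 3; move: (divz x 3) => q.
have : (x %% 3)%Z = 0 \/ (x %% 3)%Z = 1 \/ (x %% 3)%Z = 2 by lia.
case=> [->|[->|->]] ->; [left|right|right]; split => //; lia.
Qed.

Lemma fl4 (x : int) : ((x %% 2)%Z = 0 /\ 4 * (x ^+ 2 %/ 4)%Z = x ^+ 2) \/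
  ((x %% 2)%Z <> 0 /\ 4 * (x ^+ 2 %/ 4)%Z = x ^+ 2 - 1).
Proof.
have e: divz (x ^+ 2) 4 = divz x 2 * (divz x 2 + modz x 2) + divz (modz x 2 ^+ 2) 4.
  have e : x ^+ 2 = (divz x 2 * (divz x 2 + modz x 2)) * 4 + modz x 2 ^+ 2.
    by rewrite {1}(divz_eq x 2); ring.
  by rewrite {1}e divzMDl.
rewrite e.
have := divz_eq x 2; move: (divz x 2) => q.
have : (x %% 2)%Z = 0 \/ (x %% 2)%Z = 1 by lia.
case=> [->|->] ->; [left|right]; split => //; lia.
Qed.


Lemma red5 (k1 k2 k3 k4 k5 : rat) (E1 E2 E3 E4 E5 G1 G2 G3 G4 G5 Q1 Q2 Q3 Q4 Q5 dE dE' dG dG' dQ dQ' : int) :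
 E1 + E2 = 2*E3 + dE -> E4 + E5 = 2*E3 + dE' ->
 G1 + G2 = 2*G3 + dG -> G4 + G5 = 2*G3 + dG' ->
 Q1 + Q2 = 2*Q3 + dQ -> Q4 + Q5 = 2*Q3 + dQ' ->
 k1 * k2 * (2%:Q ^ dE * (5%:Q ^ dG * 11%:Q ^ dQ)) = k3 ^+ 2 + k4 * k5 * (2%:Q ^ dE' * (5%:Q ^ dG' * 11%:Q ^ dQ')) ->
 k1 * 2%:Q ^ E1 * (5%:Q ^ G1 * 11%:Q ^ Q1) * (k2 * 2%:Q ^ E2 * (5%:Q ^ G2 * 11%:Q ^ Q2))
  = (k3 * 2%:Q ^ E3 * (5%:Q ^ G3 * 11%:Q ^ Q3)) ^+ 2 + k4 * 2%:Q ^ E4 * (5%:Q ^ G4 * 11%:Q ^ Q4) * (k5 * 2%:Q ^ E5 * (5%:Q ^ G5 * 11%:Q ^ Q5)).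
Proof.
move=> h1 h2 h3 h4 h5 h6 hk.
have n2 : (2%:Q != 0) by []. have n5 : (5%:Q != 0) by []. have n11 : (11%:Q != 0) by [].
have eq1 : forall (x : rat) (A B : int), x != 0 -> x ^ A * x ^ B = x ^ (A + B).
  by move=> x A B nx; rewrite expfzDr.
have eq2 : forall (x : rat) (A B : int), x != 0 -> x ^ (2 * A + B) = (x ^ A) ^+ 2 * x ^ B.
  move=> x A B nx; have -> : 2 * A + B = A + A + B by ring.
  by rewrite !expfzDr // expr2.
transitivity (k1 * k2 * (2%:Q ^ (E1 + E2) * (5%:Q ^ (G1 + G2) * 11%:Q ^ (Q1 + Q2)))).
  rewrite -!eq1 //; ring.
transitivity ((2%:Q ^ E3 * (5%:Q ^ G3 * 11%:Q ^ Q3)) ^+ 2 * (k3 ^+ 2 + k4 * k5 * (2%:Q ^ dE' * (5%:Q ^ dG' * 11%:Q ^ dQ')))).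
  rewrite -hk h1 h3 h5 !eq2 //; ring.
have f2 : 2%:Q ^ E4 * 2%:Q ^ E5 = (2%:Q ^ E3) ^+ 2 * 2%:Q ^ dE' by rewrite eq1 // h2 eq2.
have f5 : 5%:Q ^ G4 * 5%:Q ^ G5 = (5%:Q ^ G3) ^+ 2 * 5%:Q ^ dG' by rewrite eq1 // h4 eq2.
have f11 : 11%:Q ^ Q4 * 11%:Q ^ Q5 = (11%:Q ^ Q3) ^+ 2 * 11%:Q ^ dQ' by rewrite eq1 // h6 eq2.
rewrite [RHS](_ : _ = (k3 * (2%:Q ^ E3 * (5%:Q ^ G3 * 11%:Q ^ Q3))) ^+ 2 + k4 * k5 * ((2%:Q ^ E4 * 2%:Q ^ E5) * ((5%:Q ^ G4 * 5%:Q ^ G5) * (11%:Q ^ Q4 * 11%:Q ^ Q5)))); last ring.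
rewrite f2 f5 f11; ring.
Qed.

Ltac rep3 t a b c a0 b0 c0 :=
  let f := eval pattern a, b, c in t in
  lazymatch f with ?F _ _ _ => let v := eval vm_compute in (F a0 b0 c0) in v end.

Ltac intsolve :=
  rewrite /gfun /qfun /rfun;
  repeat match goal with |- context[divz (?X ^+ 2) 3] => move: (fl3 X); move: (divz (X ^+ 2) 3) => ? end;
  repeat match goal with |- context[divz (?X ^+ 2) 4] => move: (fl4 X); move: (divz (X ^+ 2) 4) => ? end;
  lia.

Ltac solve_id a b c a0 b0 c0 :=
  rewrite /Phi1 /Phi2 /Phi3 /Psi1 /Psi2 /Psi3 /common;
  match goal with |- ?k1 * 2%:Q ^ ?E1 * (5%:Q ^ ?G1 * 11%:Q ^ ?Q1) * (?k2 * 2%:Q ^ ?E2 * (5%:Q ^ ?G2 * 11%:Q ^ ?Q2)) = (?k3 * 2%:Q ^ ?E3 * (5%:Q ^ ?G3 * 11%:Q ^ ?Q3)) ^+ 2 + ?k4 * 2%:Q ^ ?E4 * (5%:Q ^ ?G4 * 11%:Q ^ ?Q4) * (?k5 * 2%:Q ^ ?E5 * (5%:Q ^ ?G5 * 11%:Q ^ ?Q5)) =>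
   let dE := rep3 (E1 + E2 - 2 * E3) a b c a0 b0 c0 in
   let dE' := rep3 (E4 + E5 - 2 * E3) a b c a0 b0 c0 in
   let dG := rep3 (G1 + G2 - 2 * G3) a b c a0 b0 c0 in
   let dG' := rep3 (G4 + G5 - 2 * G3) a b c a0 b0 c0 in
   let dQ := rep3 (Q1 + Q2 - 2 * Q3) a b c a0 b0 c0 in
   let dQ' := rep3 (Q4 + Q5 - 2 * Q3) a b c a0 b0 c0 in
   apply (@red5 k1 k2 k3 k4 k5 E1 E2 E3 E4 E5 G1 G2 G3 G4 G5 Q1 Q2 Q3 Q4 Q5 dE dE' dG dG' dQ dQ');
   [ intsolve | intsolve | intsolve | intsolve | intsolve | intsolve | ]
  end;
  rewrite /alpha /beta;
  repeat match goal with |- context[sres ?X ?Y ?Z] =>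
    let v := rep3 (sres X Y Z) a b c a0 b0 c0 in
    rewrite (_ : sres X Y Z = v); [| rewrite /sres; lia] end;
  apply/eqP; vm_compute; reflexivity.


Ltac rep2 t a b a0 b0 :=
  let f := eval pattern a, b in t in
  lazymatch f with ?F _ _ => let v := eval vm_compute in (F a0 b0) in v end.

Ltac solve_id2 a b a0 b0 :=
  rewrite /Phi1 /Phi2 /Phi3 /Psi1 /Psi2 /Psi3 /common;
  match goal with |- ?k1 * 2%:Q ^ ?E1 * (5%:Q ^ ?G1 * 11%:Q ^ ?Q1) * (?k2 * 2%:Q ^ ?E2 * (5%:Q ^ ?G2 * 11%:Q ^ ?Q2)) = (?k3 * 2%:Q ^ ?E3 * (5%:Q ^ ?G3 * 11%:Q ^ ?Q3)) ^+ 2 + ?k4 * 2%:Q ^ ?E4 * (5%:Q ^ ?G4 * 11%:Q ^ ?Q4) * (?k5 * 2%:Q ^ ?E5 * (5%:Q ^ ?G5 * 11%:Q ^ ?Q5)) =>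
   let dE := rep2 (E1 + E2 - 2 * E3) a b a0 b0 in
   let dE' := rep2 (E4 + E5 - 2 * E3) a b a0 b0 in
   let dG := rep2 (G1 + G2 - 2 * G3) a b a0 b0 in
   let dG' := rep2 (G4 + G5 - 2 * G3) a b a0 b0 in
   let dQ := rep2 (Q1 + Q2 - 2 * Q3) a b a0 b0 in
   let dQ' := rep2 (Q4 + Q5 - 2 * Q3) a b a0 b0 in
   apply (@red5 k1 k2 k3 k4 k5 E1 E2 E3 E4 E5 G1 G2 G3 G4 G5 Q1 Q2 Q3 Q4 Q5 dE dE' dG dG' dQ dQ');
   [ intsolve | intsolve | intsolve | intsolve | intsolve | intsolve | ]
  end;
  rewrite /alpha /beta;
  repeat match goal with |- context[sres ?X ?Y ?Z] =>
    let v := rep2 (sres X Y Z) a b a0 b0 in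
    rewrite (_ : sres X Y Z = v); [| rewrite /sres; lia] end;
  apply/eqP; vm_compute; reflexivity.

Ltac cases3 a b c :=
  (have : ((a - b + c) %% 2)%Z = 0 \/ ((a - b + c) %% 2)%Z = 1 by lia);
  (have : ((a - c) %% 3)%Z = 0 \/ ((a - c) %% 3)%Z = 1 \/ ((a - c) %% 3)%Z = 2 by lia);
  case=> [Hx|[Hx|Hx]]; case=> Hy;
    [ solve_id a b c (0:int) (0:int) (0:int) | solve_id a b c (0:int) (-1:int) (0:int)
    | solve_id a b c (1:int) (1:int) (0:int) | solve_id a b c (1:int) (0:int) (0:int)
    | solve_id a b c (2:int) (2:int) (0:int) | solve_id a b c (2:int) (1:int) (0:int) ].

Ltac cases2 a b :=
  (have : ((a - b) %% 2)%Z = 0 \/ ((a - b) %% 2)%Z = 1 by lia);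
  (have : (a %% 3)%Z = 0 \/ (a %% 3)%Z = 1 \/ (a %% 3)%Z = 2 by lia);
  case=> [Hx|[Hx|Hx]]; case=> Hy;
    [ solve_id2 a b (0:int) (0:int) | solve_id2 a b (0:int) (-1:int)
    | solve_id2 a b (1:int) (1:int) | solve_id2 a b (1:int) (0:int)
    | solve_id2 a b (2:int) (2:int) | solve_id2 a b (2:int) (1:int) ].

Lemma id_Phi1 (a b c : int) :
 Phi1 a b c * Phi1 (a - 2) (b - 2) c
   = Phi1 (a - 1) (b - 1) c ^+ 2 + Phi1 a b (c + 1) * Phi1 (a - 2) (b - 2) (c - 1).
Proof. cases3 a b c. Qed.
Lemma id_Phi2 (a b c : int) :
 Phi2 a b c * Phi2 (a - 2) (b - 2) c
   = Phi2 (a - 1) (b - 1) c ^+ 2 + Phi2 a b (c + 1) * Phi2 (a - 2) (b - 2) (c - 1).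
Proof. cases3 a b c. Qed.
Lemma id_Phi3 (a b c : int) :
 Phi3 a b c * Phi3 (a - 2) (b - 2) c
   = Phi3 (a - 1) (b - 1) c ^+ 2 + Phi3 a b (c + 1) * Phi3 (a - 2) (b - 2) (c - 1).
Proof. cases3 a b c. Qed.
Lemma id_Psi1 (a b c : int) :
 Psi1 a b c * Psi1 (a - 2) (b - 2) c
   = Psi1 (a - 1) (b - 1) c ^+ 2 + Psi1 a b (c + 1) * Psi1 (a - 2) (b - 2) (c - 1).
Proof. cases3 a b c. Qed.
Lemma id_Psi2 (a b c : int) :
 Psi2 a b c * Psi2 (a - 2) (b - 2) c
   = Psi2 (a - 1) (b - 1) c ^+ 2 + Psi2 a b (c + 1) * Psi2 (a - 2) (b - 2) (c - 1).
Proof. cases3 a b c. Qed.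
Lemma id_Psi3 (a b c : int) :
 Psi3 a b c * Psi3 (a - 2) (b - 2) c
   = Psi3 (a - 1) (b - 1) c ^+ 2 + Psi3 a b (c + 1) * Psi3 (a - 2) (b - 2) (c - 1).
Proof. cases3 a b c. Qed.
Lemma idb_Phi1 (a b : int) :
 Phi1 a b 0 * Phi1 (a - 2) (b - 2) 0
   = Phi1 (a - 1) (b - 1) 0 ^+ 2 + Phi1 a b 1 * Phi1 (3 * b - 2 * a) (2 * b - a) 1.
Proof. cases2 a b. Qed.
Lemma idb_Phi2 (a b : int) :
 Phi2 a b 0 * Phi2 (a - 2) (b - 2) 0
   = Phi2 (a - 1) (b - 1) 0 ^+ 2 + Phi2 a b 1 * Phi3 (3 * b - 2 * a) (2 * b - a) 1.
Proof. cases2 a b. Qed.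
Lemma idb_Phi3 (a b : int) :
 Phi3 a b 0 * Phi3 (a - 2) (b - 2) 0
   = Phi3 (a - 1) (b - 1) 0 ^+ 2 + Phi3 a b 1 * Phi2 (3 * b - 2 * a) (2 * b - a) 1.
Proof. cases2 a b. Qed.
Lemma idb_Psi1 (a b : int) :
 Psi1 a b 0 * Psi1 (a - 2) (b - 2) 0
   = Psi1 (a - 1) (b - 1) 0 ^+ 2 + Psi1 a b 1 * Psi1 (3 * b - 2 * a) (2 * b - a) 1.
Proof. cases2 a b. Qed.
Lemma idb_Psi2 (a b : int) :
 Psi2 a b 0 * Psi2 (a - 2) (b - 2) 0
   = Psi2 (a - 1) (b - 1) 0 ^+ 2 + Psi2 a b 1 * Psi3 (3 * b - 2 * a) (2 * b - a) 1.
Proof. cases2 a b. Qed.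
Lemma idb_Psi3 (a b : int) :
 Psi3 a b 0 * Psi3 (a - 2) (b - 2) 0
   = Psi3 (a - 1) (b - 1) 0 ^+ 2 + Psi3 a b 1 * Psi2 (3 * b - 2 * a) (2 * b - a) 1.
Proof. cases2 a b. Qed.
Theorem lemma4p2 :
  (* (a) *)
  (forall (i : nat) (a b c : int), (1 <= i <= 3)%N ->
     Phi i a b c * Phi i (a - 2) (b - 2) c
       = Phi i (a - 1) (b - 1) c ^+ 2 + Phi i a b (c + 1) * Phi i (a - 2) (b - 2) (c - 1)
   /\ Psi i a b c * Psi i (a - 2) (b - 2) c
       = Psi i (a - 1) (b - 1) c ^+ 2 + Psi i a b (c + 1) * Psi i (a - 2) (b - 2) (c - 1))
  /\
  (* (b) *)
  (forall a b : int,
     Phi 1 a b 0 * Phi 1 (a - 2) (b - 2) 0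
       = Phi 1 (a - 1) (b - 1) 0 ^+ 2 + Phi 1 a b 1 * Phi 1 (3 * b - 2 * a) (2 * b - a) 1
   /\ Psi 1 a b 0 * Psi 1 (a - 2) (b - 2) 0
       = Psi 1 (a - 1) (b - 1) 0 ^+ 2 + Psi 1 a b 1 * Psi 1 (3 * b - 2 * a) (2 * b - a) 1)
  /\
  (forall (i : nat) (a b : int), (2 <= i <= 3)%N ->
     Phi i a b 0 * Phi i (a - 2) (b - 2) 0
       = Phi i (a - 1) (b - 1) 0 ^+ 2 + Phi i a b 1 * Phi (5 - i) (3 * b - 2 * a) (2 * b - a) 1
   /\ Psi i a b 0 * Psi i (a - 2) (b - 2) 0
       = Psi i (a - 1) (b - 1) 0 ^+ 2 + Psi i a b 1 * Psi (5 - i) (3 * b - 2 * a) (2 * b - a) 1).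
Proof.
split; [|split].
- move=> i a b c /andP[]; case: i => [|[|[|[|i]]]] // _ _.
  + exact: (conj (id_Phi1 a b c) (id_Psi1 a b c)).
  + exact: (conj (id_Phi2 a b c) (id_Psi2 a b c)).
  + exact: (conj (id_Phi3 a b c) (id_Psi3 a b c)).
- move=> a b; exact: (conj (idb_Phi1 a b) (idb_Psi1 a b)).
- move=> i a b /andP[]; case: i => [|[|[|[|i]]]] // _ _.
  + exact: (conj (idb_Phi2 a b) (idb_Psi2 a b)).
  + exact: (conj (idb_Phi3 a b) (idb_Psi3 a b)).
Qed.
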